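(* Let $f_1,\dots,f_n$ satisfy Assumption A1 and let $R:=\mathrm{diam}(\mathrm{Pareto}(F))$. Then for any $\beta\in\Delta^{n-1}$ and $x_\beta=x^*(\beta)$, \[\|\nabla F(x_\beta)^\top\|_{1,2}\le LR.\]
   Context: Assumption A1: each $f_i:\mathbb{R}^d\to\mathbb{R}$ is twice differentiable with $\mu\mathbf{I}\preceq\nabla^2 f_i\preceq L\mathbf{I}$, $0<\mu\le L$. $F=(f_1,\dots,f_n)$, $\nabla F(x)\in\mathbb{R}^{n\times d}$ its Jacobian (rows $\nabla f_i(x)^\top$), $\Delta^{n-1}$ the simplex, $x^*(\beta)=x_\beta=\operatorname{argmin}_x\sum_i\beta_if_i(x)$. $\mathrm{Pareto}(F)$ is the set of Pareto optimal points (equivalently $x$ with $\sum_i\beta_i\nabla f_i(x)=0$ for some $\beta\in\Delta^{n-1}$), diameter in $\ell_2$. $\|A\|_{1,2}:=\sup_{\|z\|_1=1}\|Az\|_2$. *)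

(* Defs.v *)
From HB Require Import structures.
From mathcomp Require Import all_boot all_order all_algebra.
From mathcomp Require Import all_classical all_reals all_analysis.
Set Implicit Arguments. Unset Strict Implicit. Unset Printing Implicit Defensive.
Import Order.TTheory GRing.Theory Num.Theory.
Import numFieldNormedType.Exports.
Local Open Scope classical_set_scope.
Local Open Scope ring_scope.

Section Defs.
Variable R : realType.

Definition enorm (m k : nat) (A : 'M[R]_(m, k)) : R :=
  Num.sqrt (\sum_(i < m) \sum_(j < k) A i j ^+ 2).

Definition l1norm (n : nat) (z : 'cV[R]_n) : R := \sum_(i < n) `|z i 0|.

Definition grad (d : nat) (f : 'rV[R]_d -> R) (x : 'rV[R]_d) : 'rV[R]_d :=
  \row_(j < d) 'D_(delta_mx 0 j) f x.

Definition hess (d : nat) (f : 'rV[R]_d -> R) (x : 'rV[R]_d) : 'M[R]_d :=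
  \matrix_(i < d, j < d) 'D_(delta_mx 0 j) (fun y => grad f y 0 i) x.

Definition assumptionA1 (d : nat) (mu L : R) (f : 'rV[R]_d -> R) : Prop :=
  [/\ 0 < mu, mu <= L,
      (forall x, differentiable f x),
      (forall x, differentiable (grad f) x) &
      (forall x (v : 'rV[R]_d),
          mu * enorm v ^+ 2 <= (v *m hess f x *m v^T) 0 0 /\
          (v *m hess f x *m v^T) 0 0 <= L * enorm v ^+ 2)].

Definition jac (n d : nat) (F : 'I_n -> 'rV[R]_d -> R) (x : 'rV[R]_d) : 'M[R]_(n, d) :=
  \matrix_(i < n, j < d) grad (F i) x 0 j.

Definition norm12 (d n : nat) (A : 'M[R]_(d, n)) : \bar R :=
  ereal_sup [set (enorm (A *m z))%:E | z in [set z : 'cV[R]_n | l1norm z = 1]].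

Definition pareto_optimal (n d : nat) (F : 'I_n -> 'rV[R]_d -> R) (x : 'rV[R]_d) : Prop :=
  ~ (exists y, (forall i, F i y <= F i x) /\ (exists j, F j y < F j x)).

Definition pareto_set (n d : nat) (F : 'I_n -> 'rV[R]_d -> R) : set 'rV[R]_d :=
  [set x | pareto_optimal F x].

Definition diam (d : nat) (S : set 'rV[R]_d) : \bar R :=
  ereal_sup [set r | exists x y, S x /\ S y /\ r = (enorm (x - y))%:E].

Definition in_simplex (n : nat) (beta : 'I_n -> R) : Prop :=
  (forall i, 0 <= beta i) /\ \sum_(i < n) beta i = 1.

End Defs.

(* Main.v *)
Require Import Defs.
From HB Require Import structures.
From mathcomp Require Import all_boot all_order all_algebra.
From mathcomp Require Import all_classical all_reals all_analysis.
From mathcomp Require Import ring lra.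
Import Order.TTheory GRing.Theory Num.Theory.
Import numFieldNormedType.Exports.
Local Open Scope classical_set_scope.
Local Open Scope ring_scope.

Set Implicit Arguments. Unset Strict Implicit.
Section T.
Variable R : realType.
Lemma taylor_lb (f f1 f2 : R -> R) a :
  (forall t : R, is_derive t (1:R) f (f1 t)) -> (forall t : R, is_derive t (1:R) f1 (f2 t)) ->
  (forall t : R, a <= f2 t) -> f 0 + f1 0 + a / 2 <= f 1.
Proof.
move=> D1 D2 ha.
pose psi := f - (a/2) \*: (@id R ^+ 2).
pose chi := f1 - a \*: (@id R).
have Dpsi (t:R) : is_derive t 1 psi (chi t).
  have := is_deriveB (D1 t) (is_deriveZ (a/2) (is_deriveX 2 (is_derive_id t 1))).
  suff -> : f1 t - (a / 2) *: ((2%:R * id t ^+ 2.-1) *: (1:R)) = chi t by [].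
  rewrite /chi /= /GRing.scale /= expr1 mulr1.
  rewrite (_ : (f1 - a \*: id) t = f1 t - a * t) // mulrA divfK // pnatr_eq0.
have Dchi (t:R) : is_derive t 1 chi (f2 t - a).
  have := is_deriveB (D2 t) (is_deriveZ a (is_derive_id t 1)).
  by rewrite /GRing.scale /= mulr1.
have cont (g g' : R -> R) (Dg : forall t : R, is_derive t (1:R) g (g' t)) (b c : R) : {within `[b, c], continuous g}.
  by apply: derivable_within_continuous => t _; case: (Dg t).
have [c c01 Ec] := MVT_segment ler01 (fun t _ => Dpsi t) (cont _ _ Dpsi 0 1).
have c0 : 0 <= c by move: c01; rewrite in_itv /= => /andP[].
have [e e0c Ee] := MVT_segment c0 (fun t _ => Dchi t) (cont _ _ Dchi 0 c).
have : 0 <= chi c - chi 0 by rewrite Ee mulr_ge0 // subr_ge0.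
have Epsi s : psi s = f s - a/2 * s^+2 by [].
have Echi s : chi s = f1 s - a * s by [].
move: Ec; rewrite !Epsi !Echi subr0 mulr1 expr1n mulr1 expr0n /= mulr0 subr0 mulr0 subr0 => Ec h.
lra.
Qed.

Lemma taylor_ub (f f1 f2 : R -> R) b :
  (forall t : R, is_derive t (1:R) f (f1 t)) -> (forall t : R, is_derive t (1:R) f1 (f2 t)) ->
  (forall t : R, f2 t <= b) -> f 1 <= f 0 + f1 0 + b / 2.
Proof.
move=> D1 D2 hb.
have := @taylor_lb (-f) (-f1) (-f2) (-b) (fun t => is_deriveN (D1 t)) (fun t => is_deriveN (D2 t)).
have H : (forall t, - b <= (- f2) t) by move=> t /=; rewrite lerN2.
move=> /(_ H); rewrite (_ : (- f) 0 = - f 0) // (_ : (- f1) 0 = - f1 0) // (_ : (- f) 1 = - f 1) // => h; lra.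
Qed.

Lemma line_derive (V : normedModType R) (h : V -> R) x v t :
  derivable h (x + t *: v) v ->
  is_derive t (1:R) (fun s => h (x + s *: v)) ('D_v h (x + t *: v)).
Proof.
move=> dh.
have E : (fun s : R => s^-1 *: (((fun s => h (x + s *: v)) \o shift t) (s *: 1) - (fun s => h (x + s *: v)) t)) =
  (fun s : R => s^-1 *: ((h \o shift (x + t *: v)) (s *: v) - h (x + t *: v))).
  apply/funext => s /=.
  rewrite /shift /=; congr (_ *: (h _ - _)); rewrite scalerDl addrCA; congr (_ *: _ + _); exact: mulr1.
split; rewrite /derivable /derive E //.
Qed.

Lemma D_expand d (h : 'rV[R]_d -> R) y w :
  differentiable h y ->
  'D_w h y = \sum_(k < d) w 0 k * 'D_(delta_mx 0 k) h y.
Proof.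
move=> dh; rewrite deriveE // {1}(row_sum_delta w) linear_sum.
apply: eq_bigr => k _; rewrite linearZ deriveE //.
Qed.

Definition dot d (u v : 'rV[R]_d) := \sum_(j < d) u 0 j * v 0 j.
Definition quad d (H : 'M[R]_d) (v : 'rV[R]_d) := (v *m H *m v^T) 0 0.

Lemma phi1 d (f : 'rV[R]_d -> R) (df : forall x, differentiable f x) x v t :
  is_derive t (1:R) (fun s => f (x + s *: v)) (dot (grad f (x + t *: v)) v).
Proof.
have := line_derive (diff_derivable (v:=v) (df (x + t *: v))).
rewrite D_expand // /dot.
suff -> : \sum_(k < d) v 0 k * 'D_(delta_mx 0 k) f (x + t *: v) =
  \sum_(j < d) grad f (x + t *: v) 0 j * v 0 j by [].
by apply: eq_bigr => k _; rewrite mulrC /grad mxE.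
Qed.

Lemma phi2 d (f : 'rV[R]_d -> R) (dg : forall x, differentiable (grad f) x) x v t :
  is_derive t (1:R) (fun s => dot (grad f (x + s *: v)) v) (quad (hess f (x + t *: v)) v).
Proof.
pose g (j : 'I_d) := fun y => grad f y 0 j.
have dgj j y : differentiable (g j) y.
  exact: (differentiable_comp (dg y) (differentiable_coord _ 0 j)).
have E : (fun s => dot (grad f (x + s *: v)) v) =
   \sum_(j < d) (fun s => v 0 j *: g j (x + s *: v)).
  apply/funext => s; rewrite /dot fct_sumE; apply: eq_bigr => j _.
  by rewrite /g /GRing.scale /= mulrC.
rewrite E.
have := is_derive_sum (fun j => is_deriveZ (v 0 j) (line_derive (diff_derivable (v:=v) (dgj j (x + t *: v))))).
suff -> : \sum_(j < d) v 0 j *: 'D_v (g j) (x + t *: v) = quad (hess f (x + t *: v)) v by [].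
rewrite /quad !mxE.
under eq_bigr => j _ do rewrite (D_expand _ (dgj j _)) scaler_sumr.
under [RHS]eq_bigr => j _ do rewrite !mxE big_distrl.
rewrite [RHS]exchange_big /=; apply: eq_bigr => j _; apply: eq_bigr => k _.
rewrite /hess !mxE /GRing.scale /= /g -mulrA; congr (_ * _); exact: mulrC.
Qed.

Section Alg.
Variable d : nat.
Implicit Types u v w : 'rV[R]_d.

Lemma dotC u v : dot u v = dot v u.
Proof. by apply: eq_bigr => j _; rewrite mulrC. Qed.
Lemma dotDl u v w : dot (u + v) w = dot u w + dot v w.
Proof. by rewrite /dot -big_split; apply: eq_bigr => j _; rewrite mxE mulrDl. Qed.
Lemma dotZl (a : R) u w : dot (a *: u) w = a * dot u w.
Proof. by rewrite /dot mulr_sumr; apply: eq_bigr => j _; rewrite mxE mulrA. Qed.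
Lemma dotNl u w : dot (- u) w = - dot u w.
Proof. by rewrite -scaleN1r dotZl mulN1r. Qed.
Lemma dotBl u v w : dot (u - v) w = dot u w - dot v w.
Proof. by rewrite dotDl dotNl. Qed.
Lemma dotDr u v w : dot w (u + v) = dot w u + dot w v.
Proof. by rewrite dotC dotDl !(dotC w). Qed.
Lemma dotZr (a : R) u w : dot w (a *: u) = a * dot w u.
Proof. by rewrite dotC dotZl dotC. Qed.
Lemma dotBr u v w : dot w (u - v) = dot w u - dot w v.
Proof. by rewrite dotC dotBl !(dotC w). Qed.
Lemma dot0l w : dot 0 w = 0.
Proof. by rewrite -(scale0r 0) dotZl mul0r. Qed.
Lemma dot0r w : dot w 0 = 0.
Proof. by rewrite dotC dot0l. Qed.
Lemma dot_ge0 u : 0 <= dot u u.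
Proof. by apply: sumr_ge0 => j _; rewrite -expr2 sqr_ge0. Qed.
Lemma dot_eq0 u : dot u u = 0 -> u = 0.
Proof.
move=> h; apply/rowP => j; rewrite mxE.
have H : forall k : 'I_d, true -> 0 <= u 0 k * u 0 k by move=> k _; rewrite -expr2 sqr_ge0.
have := @psumr_eq0P _ _ xpredT (fun j => u 0 j * u 0 j) H h j isT.
by move/eqP; rewrite mulf_eq0 orbb => /eqP.
Qed.
Lemma enormE u : enorm u = Num.sqrt (dot u u).
Proof. by rewrite /enorm big_ord1; congr Num.sqrt; apply: eq_bigr => j _; rewrite expr2. Qed.
Lemma enorm2 u : enorm u ^+ 2 = dot u u.
Proof. by rewrite enormE sqr_sqrtr // dot_ge0. Qed.
Lemma enorm_ge0 u : 0 <= enorm u.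
Proof. by rewrite enormE sqrtr_ge0. Qed.
Lemma enorm_eq0 u : enorm u = 0 -> u = 0.
Proof. by move=> h; apply: dot_eq0; rewrite -enorm2 h expr2 mulr0. Qed.
Lemma enorm0 : enorm (0 : 'rV[R]_d) = 0.
Proof. by rewrite enormE dot0l sqrtr0. Qed.

Lemma CS u v : dot u v <= enorm u * enorm v.
Proof.
have [a0|] := eqVneq (enorm u) 0.
  by rewrite (enorm_eq0 a0) dot0l enorm0 mul0r.
have [b0|] := eqVneq (enorm v) 0.
  by rewrite (enorm_eq0 b0) dot0r enorm0 mulr0.
move=> bn0 an0.
have a0 : 0 < enorm u by rewrite lt0r an0 enorm_ge0.
have b0 : 0 < enorm v by rewrite lt0r bn0 enorm_ge0.
have := dot_ge0 (enorm v *: u - enorm u *: v).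
rewrite !dotBl !dotBr !dotZl !dotZr -!enorm2 (dotC v u).
set a := enorm u; set b := enorm v; set c := dot u v => h.
have hab : 0 < a * b by rewrite mulr_gt0.
have : (a * b) * c <= (a * b) * (a * b) by nra.
by rewrite ler_pM2l.
Qed.

Lemma enormZ (a : R) u : enorm (a *: u) = `|a| * enorm u.
Proof. by rewrite !enormE dotZl dotZr mulrA sqrtrM ?sqrtr_sqr // -expr2 sqr_ge0. Qed.

Lemma enormD u v : enorm (u + v) <= enorm u + enorm v.
Proof.
rewrite -(ger0_norm (enorm_ge0 (u+v))) -(ger0_norm (addr_ge0 (enorm_ge0 u) (enorm_ge0 v))).
rewrite -ler_sqr ?nnegrE ?normr_ge0 // !real_normK ?num_real //.
rewrite enorm2 dotDl !dotDr -!enorm2 (dotC v u).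
have := CS u v; nra.
Qed.

Lemma normr_le_enorm u : `|u| <= enorm u.
Proof.
rewrite [leLHS]/Num.norm /= mx_normrE; apply: bigmax_le => [|[i j] _] /=.
  exact: enorm_ge0.
rewrite (ord1 i) enormE -(sqrtr_sqr (u 0 j)) ler_sqrt ?dot_ge0 //.
rewrite /dot (bigD1 j) //= -expr2 lerDl; apply: sumr_ge0 => k _; rewrite -expr2 sqr_ge0 //.
Qed.

Lemma enorm_sum (n : nat) (c : 'I_n -> R) (u : 'I_n -> 'rV[R]_d) :
  enorm (\sum_(k < n) c k *: u k) <= \sum_(k < n) `|c k| * enorm (u k).
Proof.
apply: (big_rec2 (fun s r => enorm s <= r)); first by rewrite enorm0.
move=> k s r _ h; apply: le_trans (enormD _ _) _; rewrite enormZ lerD2l //.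
Qed.
End Alg.

Lemma enorm_tr m k (A : 'M[R]_(m, k)) : enorm A^T = enorm A.
Proof. rewrite /enorm exchange_big; congr Num.sqrt; apply: eq_bigr => i _; apply: eq_bigr => j _; rewrite mxE //. Qed.

Lemma lin_zero (a c : R) : 0 <= c -> (forall t, 0 <= t * a + t ^+ 2 * c) -> a = 0.
Proof.
move=> c0 H; pose t := - a / (c + 1).
have c1 : c + 1 != 0 by rewrite gt_eqF // ltr_wpDl.
have ha : a = - t * (c + 1) by rewrite /t; field.
have := H t; rewrite ha => h.
have t0 : t = 0 by nra.
by rewrite t0 oppr0 mul0r.
Qed.

Lemma A1_bounds d mu L (f : 'rV[R]_d -> R) (h : assumptionA1 mu L f) x v :
  f x + dot (grad f x) v + mu * enorm v ^+ 2 / 2 <= f (x + v) /\ f (x + v) <= f x + dot (grad f x) v + L * enorm v ^+ 2 / 2.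
Proof.
case: h => mu0 muL df dg hq.
have D1 := phi1 df x v; have D2 := phi2 dg x v.
split.
- have := taylor_lb D1 D2 (a := mu * enorm v ^+ 2) (fun t => (hq _ v).1).
  by rewrite /= scale0r scale1r addr0.
- have := taylor_ub D1 D2 (b := L * enorm v ^+ 2) (fun t => (hq _ v).2).
  by rewrite /= scale0r scale1r addr0.
Qed.

Lemma sum_delta n (i : 'I_n) (a : 'I_n -> R) : \sum_(k < n) (k == i)%:R * a k = a i.
Proof.
rewrite (bigD1 i) //= eqxx mul1r big1 ?addr0 // => k /negbTE ->; by rewrite mul0r.
Qed.

Section Opt.
Variables (d n : nat) (mu L : R) (F : 'I_n -> 'rV[R]_d -> R).
Hypothesis hA1 : forall i, assumptionA1 mu L (F i).
Hypothesis mu0 : 0 < mu.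
Hypothesis muL : mu <= L.

Definition S (w : 'I_n -> R) x := \sum_(i < n) w i * F i x.
Definition ell (w : 'I_n -> R) x v := \sum_(i < n) w i * dot (grad (F i) x) v.

Lemma S_bounds w (hw : in_simplex w) x v :
  S w x + ell w x v + mu * enorm v ^+ 2 / 2 <= S w (x + v) /\
  S w (x + v) <= S w x + ell w x v + L * enorm v ^+ 2 / 2.
Proof.
case: hw => w0 w1.
have E (c : R) : S w x + ell w x v + c = \sum_(i < n) w i * (F i x + dot (grad (F i) x) v + c).
  rewrite /S /ell -big_split /= -[c in LHS]mul1r -w1 mulr_suml -big_split /=.
  by apply: eq_bigr => i _; rewrite !mulrDr.
rewrite !E; split; apply: ler_sum => i _; apply: ler_wpM2l => //; have [h1 h2] := A1_bounds (hA1 i) x v => //.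
Qed.

Lemma ellZ w x v (t : R) : ell w x (t *: v) = t * ell w x v.
Proof. by rewrite /ell mulr_sumr; apply: eq_bigr => i _; rewrite dotZr mulrCA. Qed.

Lemma enorm2Z (t : R) (v : 'rV[R]_d) : enorm (t *: v) ^+ 2 = t ^+ 2 * enorm v ^+ 2.
Proof. by rewrite enormZ exprMn real_normK // num_real. Qed.

Lemma min_ell w (hw : in_simplex w) x (hx : forall y, S w x <= S w y) v : ell w x v = 0.
Proof.
apply: (@lin_zero _ (L * enorm v ^+ 2 / 2)).
  by rewrite mulr_ge0 // ?invr_ge0 ?ler0n // mulr_ge0 // ?exprn_ge0 ?enorm_ge0 // (le_trans (ltW mu0)).
move=> t; have [_ h] := S_bounds hw x (t *: v).
have := le_trans (hx _) h; rewrite ellZ enorm2Z => h2.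
have : 0 <= t * ell w x v + L * (t ^+ 2 * enorm v ^+ 2) / 2 by lra.
by rewrite mulrCA [_ * (_ / 2)]mulrA.
Qed.

Lemma min_unique w (hw : in_simplex w) x (hx : forall y, S w x <= S w y) y :
  S w y <= S w x -> y = x.
Proof.
move=> hy; have [h _] := S_bounds hw x (y - x).
rewrite min_ell // addr0 (_ : x + (y - x) = y) in h; last by rewrite addrC subrK.
have e2 : enorm (y - x) ^+ 2 <= 0.
  have : mu * enorm (y - x) ^+ 2 <= 0 by lra.
  by rewrite pmulr_rle0.
have : enorm (y - x) = 0.
  apply/eqP; rewrite -sqrf_eq0 eq_le e2 /=; exact: exprn_ge0 (enorm_ge0 _).
by move/enorm_eq0/eqP; rewrite subr_eq0 => /eqP.
Qed.

Lemma min_pareto w (hw : in_simplex w) x (hx : forall y, S w x <= S w y) :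
  pareto_optimal F x.
Proof.
move=> [y [hy [j hj]]].
have : S w y <= S w x by apply: ler_sum => i _; apply: ler_wpM2l => //; case: hw.
move/(min_unique hw hx) => yx; rewrite yx in hj; by rewrite ltxx in hj.
Qed.
End Opt.

Section One.
Variables (d : nat) (mu L : R) (f : 'rV[R]_d -> R).
Hypothesis hf : assumptionA1 mu L f.

Lemma exists_min : exists p, forall y, f p <= f y.
Proof.
have [mu0 muL df _ _] := hf.
pose x0 : 'rV[R]_d := 0.
pose A := [set y | f y <= f x0].
have cf : continuous f := fun x => differentiable_continuous (df x).
have Acl : closed A := (continuous_closedP f).1 cf _ (@closed_le _ (f x0)).
pose G := enorm (grad f x0).
have bnd y : A y -> `|y| <= `|x0| + 2 * G / mu.
  move=> Ay.
  have [h _] := A1_bounds hf x0 (y - x0).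
  rewrite (_ : x0 + (y - x0) = y) in h; last by rewrite addrC subrK.
  have cs := CS (- grad f x0) (y - x0).
  have nG : enorm (- grad f x0) = G by rewrite -scaleN1r enormZ normrN normr1 mul1r.
  rewrite dotNl nG in cs.
  set e := enorm (y - x0) in h cs.
  have e0 : 0 <= e := enorm_ge0 _.
  have G0 : 0 <= G := enorm_ge0 _.
  have he : e * mu <= 2 * G.
    have : mu * e ^+ 2 / 2 <= G * e by rewrite /A /= in Ay; lra.
    nra.
  have he' : e <= 2 * G / mu by rewrite ler_pdivlMr.
  rewrite (_ : y = x0 + (y - x0)); last by rewrite addrC subrK.
  apply: le_trans (ler_normD _ _) _; rewrite lerD2l.
  exact: le_trans (normr_le_enorm _) he'.
have Abd : bounded_set A.
  rewrite /bounded_set /=; apply: filterS (nbhs_pinfty_ge (num_real (`|x0| + 2 * G / mu))).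
  by move=> M hM y Ay; apply: le_trans (bnd y Ay) hM.
have cA : compact A := bounded_closed_compact Abd Acl.
have A0 : A !=set0 by exists x0; rewrite /A /=.
have [c cA' hc] := EVT_min_rV A0 cA (continuous_subspaceT cf).
exists c => y; have [Ay|nAy] := lerP (f y) (f x0).
  by apply: hc; rewrite inE.
by apply: le_trans (ltW nAy); move: cA'; rewrite inE.
Qed.

Lemma grad_min_zero p (hp : forall y, f p <= f y) : grad f p = 0.
Proof.
have [mu0 muL _ _ _] := hf.
set g := grad f p.
have : dot g g = 0.
  apply: (@lin_zero _ (L * enorm g ^+ 2 / 2)).
    by rewrite mulr_ge0 // ?invr_ge0 ?ler0n // mulr_ge0 // ?exprn_ge0 ?enorm_ge0 // (le_trans (ltW mu0)).
  move=> t; have [_ h] := A1_bounds hf p (t *: g).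
  have := le_trans (hp _) h; rewrite dotZr enorm2Z => h2.
  have : 0 <= t * dot g g + L * (t ^+ 2 * enorm g ^+ 2) / 2 by rewrite /g; lra.
  by rewrite mulrCA [_ * (_ / 2)]mulrA.
exact: dot_eq0.
Qed.

Lemma cocoercive x y :
  f x + dot (grad f x) (y - x) + enorm (grad f y - grad f x) ^+ 2 / (2 * L) <= f y.
Proof.
have [mu0 muL _ _ _] := hf.
have L0 : 0 < L := lt_le_trans mu0 muL.
set q := grad f y - grad f x.
pose u := L^-1 *: q.
have [_ h1] := A1_bounds hf y (- u).
have [h2 _] := A1_bounds hf x (y - u - x).
rewrite (_ : x + (y - u - x) = y - u) in h2; last by rewrite addrC subrK.
have hm : 0 <= mu * enorm (y - u - x) ^+ 2 / 2.
  by rewrite mulr_ge0 // ?invr_ge0 ?ler0n // mulr_ge0 // ?exprn_ge0 ?enorm_ge0 // ltW.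
have e1 : dot (grad f x) (y - u - x) = dot (grad f x) (y - x) - dot (grad f x) u.
  by rewrite !dotBr; ring.
have e2 : dot (grad f y) (- u) = - dot (grad f y) u by rewrite dotC dotNl dotC.
have e3 : dot (grad f y) u - dot (grad f x) u = (enorm q ^+ 2) / L.
  by rewrite -dotBl -/q /u dotZr enorm2 mulrC.
have e4 : L * enorm (- u) ^+ 2 / 2 = enorm q ^+ 2 / (2 * L).
  rewrite -scaleN1r enorm2Z /u enorm2Z expr2 mulN1r opprK mul1r; field.
  by rewrite gt_eqF.
have e5 : enorm q ^+ 2 / L = 2 * (enorm q ^+ 2 / (2 * L)) by field; rewrite gt_eqF.
rewrite e1 in h2; rewrite e2 e4 in h1.
lra.
Qed.

Lemma grad_bound p (hp : forall y, f p <= f y) x : enorm (grad f x) <= L * enorm (x - p).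
Proof.
have [mu0 muL _ _ _] := hf.
have L0 : 0 < L := lt_le_trans mu0 muL.
have g0 := grad_min_zero hp.
have c1 := cocoercive p x; have c2 := cocoercive x p.
rewrite g0 dot0l subr0 in c1; rewrite g0 sub0r in c2.
have nN : enorm (- grad f x) = enorm (grad f x) by rewrite -scaleN1r enormZ normrN normr1 mul1r.
rewrite nN in c2.
set g := grad f x in c1 c2 nN *.
have hd : dot g (p - x) = - dot g (x - p).
  rewrite (_ : p - x = -(x - p)); last by rewrite opprB.
  by rewrite [LHS]dotC dotNl dotC.
have cs := CS g (x - p).
set e := enorm g in c1 c2 cs *; set E := enorm (x - p) in cs *.
have e0 : 0 <= e := enorm_ge0 _.
have E0 : 0 <= E := enorm_ge0 _.
have h : e ^+ 2 / L <= e * E.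
  have -> : e ^+ 2 / L = 2 * (e ^+ 2 / (2 * L)) by field; rewrite gt_eqF.
  lra.
have h' : e ^+ 2 <= L * (e * E) by rewrite -ler_pdivrMl // mulrC.
have [e00|ep] := eqVneq e 0; first by rewrite e00 mulr_ge0 // ltW.
have ep2 : 0 < e by rewrite lt0r ep e0.
by rewrite -(ler_pM2l ep2); move: h'; rewrite expr2 mulrCA.
Qed.
End One.
End T.

Theorem lemma10 (R : realType) (n d : nat) (mu L : R)
  (F : 'I_n -> 'rV[R]_d -> R)
  (hA1 : forall i, assumptionA1 mu L (F i))
  (beta : 'I_n -> R) (hbeta : in_simplex beta)
  (xb : 'rV[R]_d)
  (hxb : forall x, \sum_(i < n) beta i * F i xb <= \sum_(i < n) beta i * F i x) :
  (norm12 (jac F xb)^T <= L%:E * diam (pareto_set F))%E.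
Proof.
case: n F hA1 beta hbeta hxb => [|n] F hA1 beta hbeta hxb.
  by case: hbeta => _; rewrite big_ord0 => /eqP; rewrite eq_sym oner_eq0.
have [mu0 muL _ _ _] := hA1 ord0.
have L0 : 0 < L := lt_le_trans mu0 muL.
have xbP : pareto_set F xb := min_pareto hA1 mu0 muL hbeta hxb.
have hp i : exists p, pareto_set F p /\ enorm (grad (F i) xb) <= L * enorm (xb - p).
  have [p hp] := exists_min (hA1 i).
  have HH := grad_bound (hA1 i) hp xb.
  exists p; split; last exact: HH.
  apply: (@min_pareto _ _ _ _ _ _ hA1 mu0 muL (fun k => (k == i)%:R)).
    split; first by move=> k; rewrite ler0n.
    rewrite -[RHS](sum_delta i (fun=> 1)); apply: eq_bigr => k _; rewrite mulr1 //.
  by move=> y; rewrite /S !sum_delta.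
have Dge p : pareto_set F p -> ((enorm (xb - p))%:E <= diam (pareto_set F))%E.
  move=> pp; apply: ereal_sup_ubound; exists xb, p; split => //.
apply/ereal_supP => _ [z /= hz <-].
have E : enorm ((jac F xb)^T *m z) = enorm (\sum_(k < n.+1) z k 0 *: grad (F k) xb).
  rewrite -enorm_tr; congr enorm; apply/matrixP => i j.
  rewrite !mxE summxE; apply: eq_bigr => k _; rewrite !mxE mulrC.
  by rewrite (ord1 i).
rewrite E.
have T := enorm_sum (fun k => z k 0) (fun k => grad (F k) xb).
case hD: (diam (pareto_set F)) => [r| |].
- have hk k : enorm (grad (F k) xb) <= L * r.
    have [p [pp hpk]] := hp k; apply: le_trans hpk _; rewrite ler_pM2l //.
    by have := Dge p pp; rewrite hD lee_fin.
  rewrite -EFinM lee_fin; apply: le_trans T _.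
  rewrite -[leRHS]mul1r -hz /l1norm mulr_suml; apply: ler_sum => k _.
  by rewrite ler_wpM2l.
- by rewrite mulry gtr0_sg // mul1e leey.
- by have := Dge xb xbP; rewrite hD.
Qed.
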